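(* Suppose the forbidden moves $T4$, one of $F1$ or $F2$, and one of $F3$ or $F4$ are allowed, in addition to the moves $R1,R2,R3,T2,T3$. Then the moves $Fu$ and $Fv$ can be realized by finite sequences of these moves. Here $Fu$ (respectively $Fv$) is the move on Gauss diagrams which, given an arrowhead of one chord and an arrowtail of another chord that are separated on the circle by exactly one bar and no other marked point, where the two chords have the same sign (respectively opposite signs), exchanges the positions of this arrowhead and this arrowtail (the bar remaining between them, orientations and signs of chords unchanged).
   Context: A twisted knot diagram is a virtual knot diagram (an oriented generic immersed circle in the plane whose double points are either classical crossings, carrying over/under information, or virtual crossings, carrying none) which may in addition carry finitely many bars: short segments marked transversally on arcs, away from crossings. Twisted knots are equivalence classes of such diagrams under the classical Reidemeister moves $R1,R2,R3$, the virtual Reidemeister moves $V1$–$V4$, and the twisted Reidemeister moves $T1$ (a bar slides through a virtual crossing), $T2$ (two consecutive bars on an arc cancel), $T3$ (a classical crossing having a bar on each of its four incident arcs next to the crossing is replaced by the crossing with over- and under-strand exchanged, the four bars being removed). Gauss diagram of a twisted knot diagram: an oriented circle (the parametrizing circle of the knot) on which are marked, in the order met when traversing the knot from a basepoint, the two preimages of each classical crossing and one point for each bar. For each classical crossing a chord joins its two preimages, oriented from the overcrossing preimage (the arrowtail) to the undercrossing preimage (the arrowhead), and labelled by the sign $\varepsilon\in\{+,-\}$ of the crossing. Virtual crossings are not recorded. Two marked points (chord endpoints or bars) are called adjacent if no other marked point lies between them on the circle. Moves on Gauss diagrams (each may be applied in either direction): - $R1,R2,R3$: the standard Gauss-diagram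 versions of the classical Reidemeister moves, i.e. the changes of Gauss diagrams induced by classical Reidemeister moves on diagrams (e.g. $R1$ adds or removes a chord of any orientation and sign whose two endpoints are adjacent). - $T2$: add or remove two adjacent bars. - $T3$: if each endpoint of a chord is immediately preceded and immediately followed by a bar, remove these four bars, reverse the orientation of the chord and change its sign (the Gauss-diagram version of the move $T3$ above). Virtual moves and $T1$ do not change the Gauss diagram. Forbidden moves: - $T4$: add or remove a chord (of any orientation and sign) whose two endpoints are separated by exactly one bar and no other marked point (a curl with a bar). - $F1$: exchange the positions of two adjacent arrowheads of different chords (signs arbitrary). - $F2$: exchange the positions of two adjacent arrowtails of different chords (signs arbitrary). - $F3$: if two arrowheads of different chords are separated by exactly one bar and no other marked point, exchange their positions (the bar stays between them). - $F4$: the same as $F3$ for two arrowtails. *)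

(* Defs.v *)
From mathcomp Require Import all_boot.
From Stdlib Require Import Relations.Relation_Operators.

Set Implicit Arguments.
Unset Strict Implicit.
Unset Printing Implicit Defensive.

(* A marked point on the parametrizing circle: a bar, or an endpoint of the
   chord labelled [c]; [hd = true] means arrowhead (undercrossing preimage),
   [hd = false] arrowtail (overcrossing preimage); [sg = true] means sign +. *)
Inductive pt := Bar | End (c : nat) (hd : bool) (sg : bool).

(* A Gauss diagram is the list of marked points read from a basepoint along
   the orientation of the circle (considered cyclically, see [mv_rot]). *)
Definition gdiag := seq pt.
Definition grel := gdiag -> gdiag -> Prop.

Definition lab (p : pt) : option nat := if p is End c _ _ then Some c else None.
Definition labels (D : gdiag) : seq nat := pmap lab D.

Definition is_endp (c : nat) (h : bool) (p : pt) : bool :=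
  if p is End c' h' _ then (c' == c) && (h' == h) else false.
Definition sign_is (c : nat) (s : bool) (p : pt) : bool :=
  if p is End c' _ s' then (c' == c) ==> (s' == s) else true.

Definition wf (D : gdiag) : Prop :=
  forall c, c \in labels D ->
    [/\ count (is_endp c true) D = 1%N, count (is_endp c false) D = 1%N
      & exists s, all (sign_is c s) D].

Definition relab (f : nat -> nat) (p : pt) : pt :=
  if p is End c h s then End (f c) h s else p.

Inductive mv_rot : grel := MvRot D : mv_rot D (rot 1 D).
Inductive mv_relabel : grel :=
  MvRelab D (f : nat -> nat) : injective f -> mv_relabel D (map (relab f) D).

Inductive mv_R1 : grel :=
  MvR1 X Y c h s : c \notin labels (X ++ Y) ->
    mv_R1 (X ++ Y) (X ++ [:: End c h s; End c (~~ h) s] ++ Y).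

(* ---- R2: two chords of opposite signs whose arrowtails are adjacent and
   whose arrowheads are adjacent (strands parallel or antiparallel) ---- *)
Inductive mv_R2 : grel :=
  MvR2 X Y Z a b h s (par : bool) :
    a != b -> a \notin labels (X ++ Y ++ Z) -> b \notin labels (X ++ Y ++ Z) ->
    mv_R2 (X ++ Y ++ Z)
      (X ++ [:: End a h s; End b h (~~ s)] ++ Y ++
       (if par then [:: End a (~~ h) s; End b (~~ h) (~~ s)]
               else [:: End b (~~ h) (~~ s); End a (~~ h) s]) ++ Z).

(* Three strands (lines) 1,2,3; chord [a] is the crossing of
   lines 1,2, [b] of lines 2,3, [c] of lines 3,1, with signs e12 e23 e31;
   [oij = true] iff line i passes over line j (not cyclic, so that there is a
   top, a middle and a bottom strand).  On line i the two endpoints are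
   adjacent; [si = true] iff on line i the crossing with line i-1 comes first.
   A configuration comes from three lines in the plane iff
   e12+o12+s1+s2 = e23+o23+s2+s3 = e31+o31+s3+s1 (mod 2) (this is
   (sign) = (over-indicator)*s_i*s_(i+1)*(orientation of the triangle)). *)
Definition seg2 (s : bool) (p n : pt) : gdiag := if s then [:: p; n] else [:: n; p].

Definition R3_ok (e12 e23 e31 o12 o23 o31 s1 s2 s3 : bool) : bool :=
  ~~ [&& o12 == o23 & o23 == o31] &&
  [&& e12 (+) o12 (+) s1 (+) s2 == e23 (+) o23 (+) s2 (+) s3
    & e23 (+) o23 (+) s2 (+) s3 == e31 (+) o31 (+) s3 (+) s1].

Inductive mv_R3 : grel :=
  MvR3 X1 X2 X3 a b c e12 e23 e31 o12 o23 o31 s1 s2 s3 :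
    uniq [:: a; b; c] -> R3_ok e12 e23 e31 o12 o23 o31 s1 s2 s3 ->
    mv_R3
      (X1 ++ seg2 s1 (End c o31 e31) (End a (~~ o12) e12) ++
       X2 ++ seg2 s2 (End a o12 e12) (End b (~~ o23) e23) ++
       X3 ++ seg2 s3 (End b o23 e23) (End c (~~ o31) e31))
      (X1 ++ seg2 (~~ s1) (End c o31 e31) (End a (~~ o12) e12) ++
       X2 ++ seg2 (~~ s2) (End a o12 e12) (End b (~~ o23) e23) ++
       X3 ++ seg2 (~~ s3) (End b o23 e23) (End c (~~ o31) e31)).

Inductive mv_T2 : grel :=
  MvT2 X Y : mv_T2 (X ++ Y) (X ++ [:: Bar; Bar] ++ Y).

Inductive mv_T3 : grel :=
  MvT3 X Y Z c h s :
    mv_T3 (X ++ [:: Bar; End c h s; Bar] ++ Y ++ [:: Bar; End c (~~ h) s; Bar] ++ Z)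
          (X ++ [:: End c (~~ h) (~~ s)] ++ Y ++ [:: End c h (~~ s)] ++ Z).

Inductive mv_T4 : grel :=
  MvT4 X Y c h s : c \notin labels (X ++ Y) ->
    mv_T4 (X ++ Y) (X ++ [:: End c h s; Bar; End c (~~ h) s] ++ Y).

Inductive mv_F12 (hd : bool) : grel :=
  MvF12 X Y a b s t : a != b ->
    mv_F12 hd (X ++ [:: End a hd s; End b hd t] ++ Y)
              (X ++ [:: End b hd t; End a hd s] ++ Y).
Definition mv_F1 := mv_F12 true.
Definition mv_F2 := mv_F12 false.

Inductive mv_F34 (hd : bool) : grel :=
  MvF34 X Y a b s t : a != b ->
    mv_F34 hd (X ++ [:: End a hd s; Bar; End b hd t] ++ Y)
              (X ++ [:: End b hd t; Bar; End a hd s] ++ Y).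
Definition mv_F3 := mv_F34 true.
Definition mv_F4 := mv_F34 false.

Inductive mv_Fuv (same : bool) : grel :=
  | MvFuvHT X Y a b s t : a != b -> (s == t) = same ->
      mv_Fuv same (X ++ [:: End a true s; Bar; End b false t] ++ Y)
                  (X ++ [:: End b false t; Bar; End a true s] ++ Y)
  | MvFuvTH X Y a b s t : a != b -> (s == t) = same ->
      mv_Fuv same (X ++ [:: End b false t; Bar; End a true s] ++ Y)
                  (X ++ [:: End a true s; Bar; End b false t] ++ Y).
Definition mv_Fu := mv_Fuv true.
Definition mv_Fv := mv_Fuv false.

Definition allowed (useF1 useF3 : bool) : grel := fun D D' =>
  mv_rot D D' \/ mv_relabel D D' \/ mv_R1 D D' \/ mv_R2 D D' \/ mv_R3 D D' \/
  mv_T2 D D' \/ mv_T3 D D' \/ mv_T4 D D' \/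
  (if useF1 then mv_F1 D D' else mv_F2 D D') \/
  (if useF3 then mv_F3 D D' else mv_F4 D D').

Definition reach (useF1 useF3 : bool) : grel :=
  clos_refl_sym_trans gdiag (allowed useF1 useF3).

(* Main.v *)
Require Import Defs.
From mathcomp Require Import all_boot.
From Stdlib Require Import Relations.Relation_Operators.
From mathcomp Require Import zify.

Set Implicit Arguments.
Unset Strict Implicit.
Unset Printing Implicit Defensive.

Section Infra.
Variables u1 u3 : bool.
Local Notation reach := (reach u1 u3).

Lemma rtrans D1 D2 D3 : reach D1 D2 -> reach D2 D3 -> reach D1 D3.
Proof. exact: rst_trans. Qed.

Lemma sT2 X Y D D' : D = X ++ Y -> D' = X ++ [:: Bar; Bar] ++ Y -> reach D D'.
Proof. move=> -> ->; apply: rst_step; do 5 right; left; exact: MvT2. Qed.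

Lemma sT2r X Y D D' : D' = X ++ Y -> D = X ++ [:: Bar; Bar] ++ Y -> reach D D'.
Proof. move=> H1 H2; apply: rst_sym; exact: (sT2 H1 H2). Qed.

Lemma sT3 X Y Z c h s D D' :
  D = X ++ [:: Bar; End c h s; Bar] ++ Y ++ [:: Bar; End c (~~ h) s; Bar] ++ Z ->
  D' = X ++ [:: End c (~~ h) (~~ s)] ++ Y ++ [:: End c h (~~ s)] ++ Z ->
  reach D D'.
Proof. move=> -> ->; apply: rst_step; do 6 right; left; exact: MvT3. Qed.

Lemma sT4 X Y c h s D D' : c \notin labels (X ++ Y) ->
  D = X ++ Y -> D' = X ++ [:: End c h s; Bar; End c (~~ h) s] ++ Y -> reach D D'.
Proof. move=> H -> ->; apply: rst_step; do 7 right; left; exact: MvT4. Qed.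

Lemma sT4r X Y c h s D D' : c \notin labels (X ++ Y) ->
  D' = X ++ Y -> D = X ++ [:: End c h s; Bar; End c (~~ h) s] ++ Y -> reach D D'.
Proof. move=> H H1 H2; apply: rst_sym; exact: (sT4 H H1 H2). Qed.

Lemma rot_reach X Z : reach (X ++ Z) (Z ++ X).
Proof.
elim: X Z => [|x X IH] Z; first by rewrite cats0; apply: rst_refl.
apply: (@rtrans _ (X ++ Z ++ [:: x])).
  apply: rst_step; left.
  have -> : X ++ Z ++ [:: x] = rot 1 (x :: X ++ Z) by rewrite rot1_cons -cats1 catA.
  exact: MvRot.
by have := IH (Z ++ [:: x]); rewrite -catA.
Qed.

End Infra.
Arguments sT2 {u1 u3} [X Y D D'].
Arguments sT2r {u1 u3} [X Y D D'].
Arguments sT3 {u1 u3} [X Y Z c h s D D'].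
Arguments sT4 {u1 u3} [X Y c h s D D'].
Arguments sT4r {u1 u3} [X Y c h s D D'].
Arguments rot_reach {u1 u3}.

Lemma sF1 u3 X Y a b s t D D' : a != b ->
  D = X ++ [:: End a true s; End b true t] ++ Y ->
  D' = X ++ [:: End b true t; End a true s] ++ Y -> reach true u3 D D'.
Proof. move=> H -> ->; apply: rst_step; do 8 right; left; exact: MvF12. Qed.

Lemma sF2 u3 X Y a b s t D D' : a != b ->
  D = X ++ [:: End a false s; End b false t] ++ Y ->
  D' = X ++ [:: End b false t; End a false s] ++ Y -> reach false u3 D D'.
Proof. move=> H -> ->; apply: rst_step; do 8 right; left; exact: MvF12. Qed.

Arguments sF1 {u3} [X Y a b s t D D'].
Arguments sF2 {u3} [X Y a b s t D D'].

Definition fresh c (L : gdiag) :=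
  all (fun p => if p is End c' _ _ then c' != c else true) L.

Lemma fresh_notin c L : fresh c L -> c \notin labels L.
Proof.
elim: L => [|p L IH] //=; case: p => [|c' h s] //=.
rewrite /labels /= in_cons => /andP [H1 H2]; rewrite negb_or eq_sym H1 /=.
exact: IH.
Qed.

Lemma fresh_max c L : foldr maxn 0 (labels L) < c -> fresh c L.
Proof.
elim: L => [|p L IH] //=; case: p => [|c' h s] //=.
rewrite /labels /= gtn_max => /andP [H1 H2]; rewrite IH // andbT.
by rewrite neq_ltn H1.
Qed.

Ltac eqs := rewrite /= -?catA /= ?negbK.

Lemma caseF1 u3 a b c s t W1 W2 : a != b -> a != c -> b != c ->
  fresh c W1 -> fresh c W2 ->
  reach true u3 ([:: End a true s; Bar; End b false t] ++ W1 ++ End b true t :: W2)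
                ([:: End b false t; Bar; End a true s] ++ W1 ++ End b true t :: W2).
Proof.
move=> hab hac hbc f1 f2; rewrite /fresh in f1 f2.
have hba : b != a by rewrite eq_sym.
have hca : c != a by rewrite eq_sym.
have hcb : c != b by rewrite eq_sym.
set Ah := End a true s; set Bt := End b false t; set Bh := End b true t.
set Bh' := End b true (~~ t); set Bt' := End b false (~~ t).
set Ct := End c false true; set Ch := End c true true.
set Ch2 := End c true false; set Ct2 := End c false false.
set R' := W1 ++ Bar :: Bt' :: Bar :: W2.
apply: (rtrans (D2 := Ah :: Bar :: Bt :: W1 ++ Bar :: Bar :: Bh :: W2)).
  by apply: (sT2 (X := [:: Ah; Bar; Bt] ++ W1) (Y := Bh :: W2)); eqs.
apply: (rtrans (D2 := Ah :: Bar :: Bt :: W1 ++ Bar :: Bar :: Bh :: Bar :: Bar :: W2)).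
  by apply: (sT2 (X := [:: Ah; Bar; Bt] ++ W1 ++ [:: Bar; Bar; Bh]) (Y := W2)); eqs.
apply: (rtrans (D2 := Ah :: Bar :: Bt :: Bar :: Bar :: W1 ++ Bar :: Bar :: Bh :: Bar :: Bar :: W2)).
  by apply: (sT2 (X := [:: Ah; Bar; Bt]) (Y := W1 ++ Bar :: Bar :: Bh :: Bar :: Bar :: W2)); eqs.
apply: (rtrans (D2 := Ah :: Bh' :: Bar :: R')).
  by apply: (sT3 (X := [:: Ah]) (Y := Bar :: W1 ++ [:: Bar]) (Z := Bar :: W2) (c := b) (h := false) (s := t)); eqs.
apply: (rtrans (D2 := Bh' :: Ah :: Bar :: R')).
  by apply: (sF1 (X := [::]) (Y := Bar :: R') hab).
apply: (rtrans (D2 := Ct :: Bar :: Ch :: Bh' :: Ah :: Bar :: R')).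
  apply: (sT4 (X := [::]) (Y := Bh' :: Ah :: Bar :: R') (c := c) (h := false) (s := true)) => //.
  by apply: fresh_notin; rewrite /fresh /= /R' all_cat /= f1 f2 hac hbc.
apply: (rtrans (D2 := Ct :: Bar :: Bh' :: Ch :: Ah :: Bar :: R')).
  by apply: (sF1 (X := [:: Ct; Bar]) (Y := Ah :: Bar :: R') hcb).
apply: (rtrans (D2 := Ct :: Bar :: Bh' :: Ah :: Ch :: Bar :: R')).
  by apply: (sF1 (X := [:: Ct; Bar; Bh']) (Y := Bar :: R') hca).
apply: (rtrans (D2 := Bar :: Bar :: Ct :: Bar :: Bh' :: Ah :: Ch :: Bar :: R')).
  by apply: (sT2 (X := [::]) (Y := Ct :: Bar :: Bh' :: Ah :: Ch :: Bar :: R')).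
apply: (rtrans (D2 := Bar :: Bar :: Ct :: Bar :: Bh' :: Ah :: Bar :: Bar :: Ch :: Bar :: R')).
  by apply: (sT2 (X := [:: Bar; Bar; Ct; Bar; Bh'; Ah]) (Y := Ch :: Bar :: R')).
apply: (rtrans (D2 := Bar :: Ch2 :: Bh' :: Ah :: Bar :: Ct2 :: R')).
  by apply: (sT3 (X := [:: Bar]) (Y := [:: Bh'; Ah; Bar]) (Z := R') (c := c) (h := false) (s := true)).
apply: (rtrans (D2 := Bar :: Bh' :: Ch2 :: Ah :: Bar :: Ct2 :: R')).
  by apply: (sF1 (X := [:: Bar]) (Y := Ah :: Bar :: Ct2 :: R') hcb).
apply: (rtrans (D2 := Bar :: Bh' :: Bar :: Bar :: Ch2 :: Ah :: Bar :: Ct2 :: R')).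
  by apply: (sT2 (X := [:: Bar; Bh']) (Y := Ch2 :: Ah :: Bar :: Ct2 :: R')).
apply: (rtrans (D2 := Bt :: Bar :: Ch2 :: Ah :: Bar :: Ct2 :: W1 ++ Bh :: W2)).
  by apply: (sT3 (X := [::]) (Y := [:: Bar; Ch2; Ah; Bar; Ct2] ++ W1) (Z := W2) (c := b) (h := true) (s := ~~ t)); eqs.
apply: (rtrans (D2 := Bt :: Bar :: Ah :: Ch2 :: Bar :: Ct2 :: W1 ++ Bh :: W2)).
  by apply: (sF1 (X := [:: Bt; Bar]) (Y := Bar :: Ct2 :: W1 ++ Bh :: W2) hca).
apply: (sT4r (X := [:: Bt; Bar; Ah]) (Y := W1 ++ Bh :: W2) (c := c) (h := true) (s := false)) => //.
by apply: fresh_notin; rewrite /fresh /= all_cat /= f1 f2 hac hbc.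
Qed.

Lemma caseF2 u3 a b c s t W1 W2 : a != b -> a != c -> b != c ->
  fresh c W1 -> fresh c W2 ->
  reach false u3 ([:: End a true s; Bar; End b false t] ++ W1 ++ End a false s :: W2)
                 ([:: End b false t; Bar; End a true s] ++ W1 ++ End a false s :: W2).
Proof.
move=> hab hac hbc f1 f2; rewrite /fresh in f1 f2.
have hba : b != a by rewrite eq_sym.
have hca : c != a by rewrite eq_sym.
have hcb : c != b by rewrite eq_sym.
set Ah := End a true s; set Bt := End b false t; set At := End a false s.
set Ah' := End a true (~~ s); set At' := End a false (~~ s).
set Ct := End c false true; set Ch := End c true true.
set Ch2 := End c true false; set Ct2 := End c false false.
set R' := W1 ++ Bar :: Ah' :: Bar :: W2.
apply: (rtrans (D2 := Ah :: Bar :: Bt :: W1 ++ Bar :: Bar :: At :: W2)).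
  by apply: (sT2 (X := [:: Ah; Bar; Bt] ++ W1) (Y := At :: W2)); eqs.
apply: (rtrans (D2 := Ah :: Bar :: Bt :: W1 ++ Bar :: Bar :: At :: Bar :: Bar :: W2)).
  by apply: (sT2 (X := [:: Ah; Bar; Bt] ++ W1 ++ [:: Bar; Bar; At]) (Y := W2)); eqs.
apply: (rtrans (D2 := Bar :: Bar :: Ah :: Bar :: Bt :: W1 ++ Bar :: Bar :: At :: Bar :: Bar :: W2)).
  by apply: (sT2 (X := [::]) (Y := Ah :: Bar :: Bt :: W1 ++ Bar :: Bar :: At :: Bar :: Bar :: W2)).
apply: (rtrans (D2 := Bar :: At' :: Bt :: R')).
  by apply: (sT3 (X := [:: Bar]) (Y := Bt :: W1 ++ [:: Bar]) (Z := Bar :: W2) (c := a) (h := true) (s := s)); eqs.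
apply: (rtrans (D2 := Bar :: Bt :: At' :: R')).
  by apply: (sF2 (X := [:: Bar]) (Y := R') hab).
apply: (rtrans (D2 := Bar :: Ch :: Bar :: Ct :: Bt :: At' :: R')).
  apply: (sT4 (X := [:: Bar]) (Y := Bt :: At' :: R') (c := c) (h := true) (s := true)) => //.
  by apply: fresh_notin; rewrite /fresh /= /R' all_cat /= f1 f2 hac hbc.
apply: (rtrans (D2 := Bar :: Ch :: Bar :: Bt :: Ct :: At' :: R')).
  by apply: (sF2 (X := [:: Bar; Ch; Bar]) (Y := At' :: R') hcb).
apply: (rtrans (D2 := Bar :: Ch :: Bar :: Bt :: At' :: Ct :: R')).
  by apply: (sF2 (X := [:: Bar; Ch; Bar; Bt]) (Y := R') hca).
apply: (rtrans (D2 := Bar :: Ch :: Bar :: Bt :: At' :: Bar :: Bar :: Ct :: R')).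
  by apply: (sT2 (X := [:: Bar; Ch; Bar; Bt; At']) (Y := Ct :: R')).
apply: (rtrans (D2 := Bar :: Ch :: Bar :: Bt :: At' :: Bar :: Bar :: Ct :: Bar :: Bar :: R')).
  by apply: (sT2 (X := [:: Bar; Ch; Bar; Bt; At'; Bar; Bar; Ct]) (Y := R')).
apply: (rtrans (D2 := Ct2 :: Bt :: At' :: Bar :: Ch2 :: Bar :: R')).
  by apply: (sT3 (X := [::]) (Y := [:: Bt; At'; Bar]) (Z := Bar :: R') (c := c) (h := true) (s := true)).
apply: (rtrans (D2 := Bt :: Ct2 :: At' :: Bar :: Ch2 :: Bar :: R')).
  by apply: (sF2 (X := [::]) (Y := At' :: Bar :: Ch2 :: Bar :: R') hcb).
apply: (rtrans (D2 := Bt :: At' :: Ct2 :: Bar :: Ch2 :: Bar :: R')).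
  by apply: (sF2 (X := [:: Bt]) (Y := Bar :: Ch2 :: Bar :: R') hca).
apply: (rtrans (D2 := Bt :: Bar :: Bar :: At' :: Ct2 :: Bar :: Ch2 :: Bar :: R')).
  by apply: (sT2 (X := [:: Bt]) (Y := At' :: Ct2 :: Bar :: Ch2 :: Bar :: R')).
apply: (rtrans (D2 := Bt :: Bar :: Bar :: At' :: Bar :: Bar :: Ct2 :: Bar :: Ch2 :: Bar :: R')).
  by apply: (sT2 (X := [:: Bt; Bar; Bar; At']) (Y := Ct2 :: Bar :: Ch2 :: Bar :: R')).
apply: (rtrans (D2 := Bt :: Bar :: Ah :: Bar :: Ct2 :: Bar :: Ch2 :: Bar :: W1 ++ At :: W2)).
  by apply: (sT3 (X := [:: Bt; Bar]) (Y := [:: Bar; Ct2; Bar; Ch2; Bar] ++ W1) (Z := W2) (c := a) (h := false) (s := ~~ s)); eqs.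
apply: (rtrans (D2 := Bt :: Bar :: Ah :: Bar :: Bar :: W1 ++ At :: W2)).
  apply: (sT4r (X := [:: Bt; Bar; Ah; Bar]) (Y := Bar :: W1 ++ At :: W2) (c := c) (h := false) (s := false)) => //.
  by apply: fresh_notin; rewrite /fresh /= all_cat /= f1 f2 hac hbc.
by apply: (sT2r (X := [:: Bt; Bar; Ah]) (Y := W1 ++ At :: W2)).
Qed.

Lemma split_has (P : pred pt) L : has P L -> exists W1 p W2, L = W1 ++ p :: W2 /\ P p.
Proof.
elim: L => [|q L IH] //= /orP [Hq|/IH [W1 [p [W2 [-> Hp]]]]].
  by exists [::], q, L.
by exists (q :: W1), p, W2.
Qed.

Lemma remote_gen X Y Q e h r : wf (X ++ Q ++ Y) -> count (is_endp e h) Q = 0 ->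
  e \in labels Q -> (forall s0, all (sign_is e s0) Q -> r = s0) ->
  exists W1 W2, Y ++ X = W1 ++ End e h r :: W2.
Proof.
move=> Hwf HQ HeQ Hr.
have [Hc _ [s0 Hs]] : [/\ count (is_endp e h) (X ++ Q ++ Y) = 1,
   count (is_endp e (~~ h)) (X ++ Q ++ Y) = 1 & exists s, all (sign_is e s) (X ++ Q ++ Y)].
  have Hin : e \in labels (X ++ Q ++ Y) by rewrite /labels !pmap_cat !mem_cat HeQ orbT.
  by have [H1 H2 H3] := Hwf e Hin; case: h {HQ}; split.
have : has (is_endp e h) (Y ++ X).
  by rewrite has_count count_cat; rewrite !count_cat HQ in Hc; rewrite addnC; move: Hc => /= ->.
case/split_has => W1 [p [W2 [HW Hp]]].
move: Hs; rewrite !all_cat => /and3P [HX HQs HY].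
have := Hr _ HQs => Er.
have : all (sign_is e s0) (Y ++ X) by rewrite all_cat HX HY.
rewrite HW all_cat /= => /and3P [_ Hp' _].
case: p Hp Hp' HW => [|c' h' s'] //= /andP [/eqP E1 /eqP E2]; subst c' h'.
rewrite !eqxx /= => /eqP E3 HW; by exists W1, W2; rewrite E3 Er.
Qed.

Lemma core u1 u3 a b s t X Y : a != b ->
  (exists W1 W2, Y ++ X = W1 ++ (if u1 then End b true t else End a false s) :: W2) ->
  reach u1 u3 (X ++ [:: End a true s; Bar; End b false t] ++ Y)
              (X ++ [:: End b false t; Bar; End a true s] ++ Y).
Proof.
move=> hab [W1 [W2 HW]].
pose c := (foldr maxn 0 (labels (W1 ++ W2)) + a + b).+1.
have fc : fresh c (W1 ++ W2) by apply: fresh_max; rewrite /c; lia.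
move: fc; rewrite /fresh all_cat => /andP [f1 f2].
have hac : a != c.
  by rewrite /c; apply/eqP; lia.
have hbc : b != c.
  by rewrite /c; apply/eqP; lia.
apply: (rtrans (D2 := [:: End a true s; Bar; End b false t] ++ Y ++ X)).
  by have := rot_reach X ([:: End a true s; Bar; End b false t] ++ Y); rewrite -catA.
apply: (rtrans (D2 := [:: End b false t; Bar; End a true s] ++ Y ++ X)); last first.
  by have := rot_reach ([:: End b false t; Bar; End a true s] ++ Y) X; rewrite -catA.
rewrite HW; clear HW; case: u1 => /=.
  move: (@caseF1 u3 a b c s t W1 W2 hab hac hbc f1 f2) => HH; exact HH.
move: (@caseF2 u3 a b c s t W1 W2 hab hac hbc f1 f2) => HH; exact HH.
Qed.

Lemma infoHT (a b : nat) (s t : bool) X Y : a != b ->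
  wf (X ++ [:: End a true s; Bar; End b false t] ++ Y) -> forall u1 : bool,
  exists W1 W2, Y ++ X = W1 ++ (if u1 then End b true t else End a false s) :: W2.
Proof.
move=> hab Hwf [].
  apply: remote_gen Hwf _ _ _ => /=; first by rewrite (negbTE hab) !eqxx.
    by rewrite !in_cons !eqxx ?orbT.
  by move=> s0; rewrite /= (negbTE hab) !eqxx /= andbT => /eqP.
apply: remote_gen Hwf _ _ _ => /=; first by rewrite (eq_sym b a) (negbTE hab) !eqxx.
  by rewrite !in_cons !eqxx ?orbT.
by move=> s0; rewrite /= (eq_sym b a) (negbTE hab) !eqxx /= andbT => /eqP.
Qed.

Lemma infoTH (a b : nat) (s t : bool) X Y : a != b ->
  wf (X ++ [:: End b false t; Bar; End a true s] ++ Y) -> forall u1 : bool,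
  exists W1 W2, Y ++ X = W1 ++ (if u1 then End b true t else End a false s) :: W2.
Proof.
move=> hab Hwf [].
  apply: remote_gen Hwf _ _ _ => /=; first by rewrite (negbTE hab) !eqxx.
    by rewrite !in_cons !eqxx ?orbT.
  by move=> s0; rewrite /= (negbTE hab) !eqxx /= andbT => /eqP.
apply: remote_gen Hwf _ _ _ => /=; first by rewrite (eq_sym b a) (negbTE hab) !eqxx.
  by rewrite !in_cons !eqxx ?orbT.
by move=> s0; rewrite /= (eq_sym b a) (negbTE hab) !eqxx /= andbT => /eqP.
Qed.

Theorem lemma1 (useF1 useF3 : bool) (D D' : gdiag) :
  wf D -> (mv_Fu D D' \/ mv_Fv D D') -> reach useF1 useF3 D D'.
Proof.
move=> Hwf H.
have {H} [same H] : exists same, mv_Fuv same D D' by case: H => H; [exists true | exists false]; exact H.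
case: H Hwf => X Y a b s t hab _ Hwf.
- apply: core => //; exact: (infoHT hab Hwf).
- apply: rst_sym; apply: core => //; exact: (infoTH hab Hwf).
Qed.
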